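(* Let $a\in\mathbb{O}$ have norm one. The following are equivalent: (1) ${}^*\mathbb{O}_l(a,1)$ satisfies $(x^2,x^2,x^2)=0$; (2) ${}^*\mathbb{O}_r(a,1)$ satisfies $(x^2,x^2,x^2)=0$; (3) $a^2=\pm1$. Under these conditions ${}^*\mathbb{O}_l(a,1)$ and ${}^*\mathbb{O}_r(a,1)$ are isomorphic; moreover, if $a^2=-1$ then ${}^*\mathbb{O}_l(a,1)$ has degree four.
   Context: $\mathbb{O}$ is the real octonion algebra with conjugation $\bar x$. For norm-one $a$, ${}^*\mathbb{O}_l(a,1)$ and ${}^*\mathbb{O}_r(a,1)$ are the normed space of $\mathbb{O}$ with products $x\odot y=(\bar x a)y$ and $x\odot y=\bar x(ay)$ respectively. Here $x^2=x\odot x$ and $(x,y,z)=(x\odot y)\odot z-x\odot(y\odot z)$. The degree of a finite-dimensional algebra is the smallest $n$ such that every single-generated subalgebra has dimension $\le n$. *)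

(* Defs.v *)
From HB Require Import structures.
From mathcomp Require Import all_boot all_order all_algebra.
From mathcomp Require Import reals.
Set Implicit Arguments. Unset Strict Implicit. Unset Printing Implicit Defensive.
Import Order.TTheory GRing.Theory Num.Theory.
Local Open Scope ring_scope.

(* Real octonions, realised as 'rV[R]_8 (an R-vectType) with the Cayley-Dickson
   product on pairs of quaternions: (a,b)(c,d) = (ac - conj(d) b, da + b conj(c)).
   Coordinates 0..3 = first quaternion (1,i,j,k), 4..7 = second quaternion. *)

Section Oct.
Variable R : realType.

Record quat := Quat { q0 : R; q1 : R; q2 : R; q3 : R }.

Definition qmul (p q : quat) : quat :=
  Quat (q0 p * q0 q - q1 p * q1 q - q2 p * q2 q - q3 p * q3 q)
       (q0 p * q1 q + q1 p * q0 q + q2 p * q3 q - q3 p * q2 q)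
       (q0 p * q2 q - q1 p * q3 q + q2 p * q0 q + q3 p * q1 q)
       (q0 p * q3 q + q1 p * q2 q - q2 p * q1 q + q3 p * q0 q).
Definition qadd (p q : quat) : quat :=
  Quat (q0 p + q0 q) (q1 p + q1 q) (q2 p + q2 q) (q3 p + q3 q).
Definition qopp (p : quat) : quat := Quat (- q0 p) (- q1 p) (- q2 p) (- q3 p).
Definition qconj (p : quat) : quat := Quat (q0 p) (- q1 p) (- q2 p) (- q3 p).

Definition oct := 'rV[R]_8.

Definition ocoord (x : oct) (k : nat) : R := x ord0 (inord k).
Definition ofst (x : oct) : quat := Quat (ocoord x 0) (ocoord x 1) (ocoord x 2) (ocoord x 3).
Definition osnd (x : oct) : quat := Quat (ocoord x 4) (ocoord x 5) (ocoord x 6) (ocoord x 7).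
Definition of_quats (p q : quat) : oct :=
  \row_(i < 8) nth 0 [:: q0 p; q1 p; q2 p; q3 p; q0 q; q1 q; q2 q; q3 q] i.

Definition omul (x y : oct) : oct :=
  let a := ofst x in let b := osnd x in let c := ofst y in let d := osnd y in
  of_quats (qadd (qmul a c) (qopp (qmul (qconj d) b)))
           (qadd (qmul d a) (qmul b (qconj c))).

Definition oconj (x : oct) : oct :=
  \row_(i < 8) (if val i == 0%N then x ord0 i else - x ord0 i).
Definition oone : oct := \row_(i < 8) (val i == 0%N)%:R.
Definition onorm2 (x : oct) : R := \sum_(i < 8) x ord0 i ^+ 2.

Definition prodl (a : oct) (x y : oct) : oct := omul (omul (oconj x) a) y.
Definition prodr (a : oct) (x y : oct) : oct := omul (oconj x) (omul a y).

Definition sq (m : oct -> oct -> oct) (x : oct) : oct := m x x.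
Definition assoc (m : oct -> oct -> oct) (x y z : oct) : oct :=
  m (m x y) z - m x (m y z).

Definition isomorphic (m1 m2 : oct -> oct -> oct) : Prop :=
  exists f : oct -> oct,
    [/\ (forall (k : R) (x y : oct), f (k *: x + y) = k *: f x + f y),
        bijective f &
        forall x y, f (m1 x y) = m2 (f x) (f y)].

Definition subalg_closed (m : oct -> oct -> oct) (U : {vspace oct}) : Prop :=
  forall u v, u \in U -> v \in U -> m u v \in U.

Definition gen_subalg (m : oct -> oct -> oct) (x : oct) (U : {vspace oct}) : Prop :=
  [/\ x \in U, subalg_closed m U &
      forall V : {vspace oct}, x \in V -> subalg_closed m V -> (U <= V)%VS].

Definition degree_bound (m : oct -> oct -> oct) (n : nat) : Prop :=
  forall x U, gen_subalg m x U -> (\dim U <= n)%N.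

Definition has_degree (m : oct -> oct -> oct) (n : nat) : Prop :=
  degree_bound m n /\ forall k, degree_bound m k -> (n <= k)%N.

End Oct.

(* Main.v *)
Require Import Defs.
From HB Require Import structures.
From mathcomp Require Import all_boot all_order all_algebra.
From mathcomp Require Import reals.
From mathcomp Require Import ring lra.
Import Order.TTheory GRing.Theory Num.Theory.
Local Open Scope ring_scope.
Set Implicit Arguments. Unset Strict Implicit. Unset Printing Implicit Defensive.

Ltac case8 i := case: i => [[|[|[|[|[|[|[|[|//]]]]]]]] ?].

Section S.
Variable R : realType.
Implicit Types (p q r s : quat R) (x y z : oct R).


Definition mk8 (x0 x1 x2 x3 x4 x5 x6 x7 : R) : oct R :=
  of_quats (Quat x0 x1 x2 x3) (Quat x4 x5 x6 x7).

Lemma of_quats_coord p q (i : 'I_8) :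
  of_quats p q ord0 i = nth 0 [:: q0 p; q1 p; q2 p; q3 p; q0 q; q1 q; q2 q; q3 q] i.
Proof. by rewrite mxE. Qed.

Lemma ofstE p q : ofst (of_quats p q) = p.
Proof. by case: p => *; rewrite /ofst /ocoord !of_quats_coord !inordK. Qed.
Lemma osndE p q : osnd (of_quats p q) = q.
Proof. by case: q => *; rewrite /osnd /ocoord !of_quats_coord !inordK. Qed.

Lemma oct_eta x : x = of_quats (ofst x) (osnd x).
Proof.
apply/rowP => i; rewrite of_quats_coord /= /ocoord.
have -> : ord0 = 0 :> 'I_1 by [].
by case: i => [[|[|[|[|[|[|[|[|//]]]]]]]] Hi] /=; congr (x _ _); apply/val_inj; rewrite /= inordK.
Qed.

Lemma octW (P : oct R -> Prop) :
  (forall x0 x1 x2 x3 x4 x5 x6 x7 : R, P (mk8 x0 x1 x2 x3 x4 x5 x6 x7)) -> forall x, P x.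
Proof. by move=> H x; rewrite (oct_eta x); case: (ofst x) (osnd x) => ???? [????]; apply: H. Qed.

Definition qscale (k : R) p := Quat (k * q0 p) (k * q1 p) (k * q2 p) (k * q3 p).


Lemma omulE p q r s : omul (of_quats p q) (of_quats r s) =
  of_quats (qadd (qmul p r) (qopp (qmul (qconj s) q))) (qadd (qmul s p) (qmul q (qconj r))).
Proof. by rewrite /omul !ofstE !osndE. Qed.
Lemma oconjE p q : oconj (of_quats p q) = of_quats (qconj p) (qopp q).
Proof. by apply/rowP => i; rewrite !mxE; case8 i. Qed.
Lemma addE p q r s : of_quats p q + of_quats r s = of_quats (qadd p r) (qadd q s).
Proof. by apply/rowP => i; rewrite !mxE; case8 i. Qed.
Lemma oppE p q : - of_quats p q = of_quats (qopp p) (qopp q).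
Proof. by apply/rowP => i; rewrite !mxE; case8 i. Qed.
Lemma scaleE k p q : k *: of_quats p q = of_quats (qscale k p) (qscale k q).
Proof. by apply/rowP => i; rewrite !mxE; case8 i. Qed.
Lemma oneE : oone R = of_quats (Quat 1 0 0 0) (Quat 0 0 0 0).
Proof. by apply/rowP => i; rewrite !mxE; case8 i. Qed.
Lemma zeroE : 0 = of_quats (Quat 0 0 0 0) (Quat (0:R) 0 0 0).
Proof. by apply/rowP => i; rewrite !mxE; case8 i. Qed.
Lemma onorm2E p q : onorm2 (of_quats p q) =
  q0 p ^+ 2 + q1 p ^+ 2 + q2 p ^+ 2 + q3 p ^+ 2 + q0 q ^+ 2 + q1 q ^+ 2 + q2 q ^+ 2 + q3 q ^+ 2.
Proof. by rewrite /onorm2 !big_ord_recr big_ord0 /= !of_quats_coord /= add0r. Qed.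

Lemma ocoord0E p q : ocoord (of_quats p q) 0 = q0 p.
Proof. by rewrite /ocoord of_quats_coord inordK. Qed.

Lemma oq_eq (p q r s : quat R) :
  q0 p = q0 r -> q1 p = q1 r -> q2 p = q2 r -> q3 p = q3 r ->
  q0 q = q0 s -> q1 q = q1 s -> q2 q = q2 s -> q3 q = q3 s ->
  of_quats p q = of_quats r s.
Proof. by case: p r q s => ???? [????] [????] [????] /= -> -> -> -> -> -> -> ->. Qed.



End S.

Ltac osimp := rewrite /mk8 /assoc /sq /prodl /prodr;
  rewrite ?(ofstE, osndE, oconjE, addE, oppE, scaleE, oneE, omulE).
Ltac qcbn := cbn [q0 q1 q2 q3 qadd qmul qopp qconj qscale].
Ltac oring := apply: oq_eq; qcbn; ring.


Section S.
Variable R : realType.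
Implicit Types (p q r s : quat R) (x y z : oct R).
Lemma imag_eta x : q0 (ofst (R:=R) x) = 0 ->
  x = mk8 0 (q1 (ofst (R:=R) x)) (q2 (ofst (R:=R) x)) (q3 (ofst (R:=R) x)) (q0 (osnd (R:=R) x)) (q1 (osnd (R:=R) x)) (q2 (osnd (R:=R) x)) (q3 (osnd (R:=R) x)).
Proof. by move=> h; rewrite {1}[x]oct_eta /mk8; case: (ofst (R:=R) x) h (osnd (R:=R) x) => /= ???? -> []. Qed.

Lemma real_eta x : q1 (ofst (R:=R) x) = 0 -> q2 (ofst (R:=R) x) = 0 -> q3 (ofst (R:=R) x) = 0 ->
  q0 (osnd (R:=R) x) = 0 -> q1 (osnd (R:=R) x) = 0 -> q2 (osnd (R:=R) x) = 0 -> q3 (osnd (R:=R) x) = 0 ->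
  x = mk8 (q0 (ofst (R:=R) x)) 0 0 0 0 0 0 0.
Proof.
by move=> h1 h2 h3 h4 h5 h6 h7; rewrite {1}[x]oct_eta /mk8; case: (ofst (R:=R) x) h1 h2 h3 (osnd (R:=R) x) h4 h5 h6 h7 => /= ???? -> -> -> [????] /= -> -> -> ->.
Qed.

Lemma assoc_imag_l (a1 a2 a3 a4 a5 a6 a7 u1 u2 u3 u4 u5 u6 u7 : R) :
  let a := mk8 0 a1 a2 a3 a4 a5 a6 a7 in let u := mk8 0 u1 u2 u3 u4 u5 u6 u7 in
  assoc (prodl a) u u u = 0.
Proof. rewrite /= zeroE; osimp; oring. Qed.

Lemma assoc_imag_r (a1 a2 a3 a4 a5 a6 a7 u1 u2 u3 u4 u5 u6 u7 : R) :
  let a := mk8 0 a1 a2 a3 a4 a5 a6 a7 in let u := mk8 0 u1 u2 u3 u4 u5 u6 u7 in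
  assoc (prodr a) u u u = 0.
Proof. rewrite /= zeroE; osimp; oring. Qed.

Lemma re_sq_l (a1 a2 a3 a4 a5 a6 a7 : R) x :
  q0 (ofst (sq (prodl (mk8 0 a1 a2 a3 a4 a5 a6 a7)) x)) = 0.
Proof. elim/octW: x => *; osimp; rewrite ?ofstE ?ocoord0E; qcbn; ring. Qed.
Lemma re_sq_r (a1 a2 a3 a4 a5 a6 a7 : R) x :
  q0 (ofst (sq (prodr (mk8 0 a1 a2 a3 a4 a5 a6 a7)) x)) = 0.
Proof. elim/octW: x => *; osimp; rewrite ?ofstE ?ocoord0E; qcbn; ring. Qed.

Lemma assoc_real_l (a0 c0 : R) : let a := mk8 a0 0 0 0 0 0 0 0 in let u := mk8 c0 0 0 0 0 0 0 0 in
  assoc (prodl a) u u u = 0.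
Proof. rewrite /= zeroE; osimp; oring. Qed.
Lemma assoc_real_r (a0 c0 : R) : let a := mk8 a0 0 0 0 0 0 0 0 in let u := mk8 c0 0 0 0 0 0 0 0 in
  assoc (prodr a) u u u = 0.
Proof. rewrite /= zeroE; osimp; oring. Qed.

Lemma sq_real_l (a0 : R) x : exists c0, sq (prodl (mk8 a0 0 0 0 0 0 0 0)) x = mk8 c0 0 0 0 0 0 0 0.
Proof.
elim/octW: x => x0 x1 x2 x3 x4 x5 x6 x7.
exists (a0 * (x0^+2 + x1^+2 + x2^+2 + x3^+2 + x4^+2 + x5^+2 + x6^+2 + x7^+2)).
osimp; oring.
Qed.
Lemma sq_real_r (a0 : R) x : exists c0, sq (prodr (mk8 a0 0 0 0 0 0 0 0)) x = mk8 c0 0 0 0 0 0 0 0.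
Proof.
elim/octW: x => x0 x1 x2 x3 x4 x5 x6 x7.
exists (a0 * (x0^+2 + x1^+2 + x2^+2 + x3^+2 + x4^+2 + x5^+2 + x6^+2 + x7^+2)).
osimp; oring.
Qed.

End S.

Section S.
Variable R : realType.
Implicit Types (p q r s : quat R) (x y z : oct R).

Definition y1 (a1 a2 a3 a4 a5 a6 a7 : R) := mk8 0 0 a3 (-a2) a5 (-a4) (-a7) a6.
Definition y2 (a1 a2 a3 a4 a5 a6 a7 : R) := mk8 0 (-a3) 0 a1 a6 a7 (-a4) (-a5).

Lemma sq_y1_l (a0 a1 a2 a3 a4 a5 a6 a7 : R) :
  sq (prodl (mk8 a0 a1 a2 a3 a4 a5 a6 a7)) (y1 a1 a2 a3 a4 a5 a6 a7) =
  (a2^+2 + a3^+2 + a4^+2 + a5^+2 + a6^+2 + a7^+2) *: oconj (mk8 a0 a1 a2 a3 a4 a5 a6 a7).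
Proof. rewrite /y1; osimp; oring. Qed.
Lemma sq_y1_r (a0 a1 a2 a3 a4 a5 a6 a7 : R) :
  sq (prodr (mk8 a0 a1 a2 a3 a4 a5 a6 a7)) (y1 a1 a2 a3 a4 a5 a6 a7) =
  (a2^+2 + a3^+2 + a4^+2 + a5^+2 + a6^+2 + a7^+2) *: oconj (mk8 a0 a1 a2 a3 a4 a5 a6 a7).
Proof. rewrite /y1; osimp; oring. Qed.
Lemma sq_y2_l (a0 a1 a2 a3 a4 a5 a6 a7 : R) :
  sq (prodl (mk8 a0 a1 a2 a3 a4 a5 a6 a7)) (y2 a1 a2 a3 a4 a5 a6 a7) =
  (a1^+2 + a3^+2 + a4^+2 + a5^+2 + a6^+2 + a7^+2) *: oconj (mk8 a0 a1 a2 a3 a4 a5 a6 a7).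
Proof. rewrite /y2; osimp; oring. Qed.
Lemma sq_y2_r (a0 a1 a2 a3 a4 a5 a6 a7 : R) :
  sq (prodr (mk8 a0 a1 a2 a3 a4 a5 a6 a7)) (y2 a1 a2 a3 a4 a5 a6 a7) =
  (a1^+2 + a3^+2 + a4^+2 + a5^+2 + a6^+2 + a7^+2) *: oconj (mk8 a0 a1 a2 a3 a4 a5 a6 a7).
Proof. rewrite /y2; osimp; oring. Qed.

Lemma re_assoc_l (m a0 a1 a2 a3 a4 a5 a6 a7 : R) :
  q0 (ofst (assoc (prodl (mk8 a0 a1 a2 a3 a4 a5 a6 a7)) (m *: oconj (mk8 a0 a1 a2 a3 a4 a5 a6 a7)) (m *: oconj (mk8 a0 a1 a2 a3 a4 a5 a6 a7)) (m *: oconj (mk8 a0 a1 a2 a3 a4 a5 a6 a7)))) =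
  4 * m^+3 * (a0^+2 + a1^+2 + a2^+2 + a3^+2 + a4^+2 + a5^+2 + a6^+2 + a7^+2) * a0 *
  (a1^+2 + a2^+2 + a3^+2 + a4^+2 + a5^+2 + a6^+2 + a7^+2).
Proof. osimp; rewrite ?ofstE ?ocoord0E; qcbn; ring. Qed.
Lemma re_assoc_r (m a0 a1 a2 a3 a4 a5 a6 a7 : R) :
  q0 (ofst (assoc (prodr (mk8 a0 a1 a2 a3 a4 a5 a6 a7)) (m *: oconj (mk8 a0 a1 a2 a3 a4 a5 a6 a7)) (m *: oconj (mk8 a0 a1 a2 a3 a4 a5 a6 a7)) (m *: oconj (mk8 a0 a1 a2 a3 a4 a5 a6 a7)))) =
  4 * m^+3 * (a0^+2 + a1^+2 + a2^+2 + a3^+2 + a4^+2 + a5^+2 + a6^+2 + a7^+2) * a0 *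
  (a1^+2 + a2^+2 + a3^+2 + a4^+2 + a5^+2 + a6^+2 + a7^+2).
Proof. osimp; rewrite ?ofstE ?ocoord0E; qcbn; ring. Qed.

End S.

Section S.
Variable R : realType.
Implicit Types (p q r s : quat R) (x y z : oct R).

Definition fiso (a x : oct R) := omul (omul a x) (oconj a).
Definition giso (a x : oct R) := omul (omul (oconj a) x) a.

Lemma fiso_lin a k x y : fiso a (k *: x + y) = k *: fiso a x + fiso a y.
Proof. elim/octW: a => *; elim/octW: x => *; elim/octW: y => *; rewrite /fiso; osimp; oring. Qed.

Lemma gf_imag (a1 a2 a3 a4 a5 a6 a7 : R) x :
  giso (mk8 0 a1 a2 a3 a4 a5 a6 a7) (fiso (mk8 0 a1 a2 a3 a4 a5 a6 a7) x) =
  (onorm2 (mk8 0 a1 a2 a3 a4 a5 a6 a7) ^+ 2) *: x.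
Proof. (elim/octW: x => *; rewrite /fiso /giso; osimp; rewrite onorm2E; oring). Qed.
Lemma fg_imag (a1 a2 a3 a4 a5 a6 a7 : R) x :
  fiso (mk8 0 a1 a2 a3 a4 a5 a6 a7) (giso (mk8 0 a1 a2 a3 a4 a5 a6 a7) x) =
  (onorm2 (mk8 0 a1 a2 a3 a4 a5 a6 a7) ^+ 2) *: x.
Proof. (elim/octW: x => *; rewrite /fiso /giso; osimp; rewrite onorm2E; oring). Qed.

Lemma fiso_real (a0 : R) x : fiso (mk8 a0 0 0 0 0 0 0 0) x = (a0 ^+ 2) *: x.
Proof. elim/octW: x => *; rewrite /fiso; osimp; oring. Qed.
Lemma prodlr_real (a0 : R) x y : prodl (mk8 a0 0 0 0 0 0 0 0) x y = prodr (mk8 a0 0 0 0 0 0 0 0) x y.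
Proof. elim/octW: x => *; elim/octW: y => *; osimp; oring. Qed.

Lemma fiso_hom_imag (a1 a2 a3 a4 a5 a6 a7 : R) x y :
  onorm2 (mk8 0 a1 a2 a3 a4 a5 a6 a7) *: fiso (mk8 0 a1 a2 a3 a4 a5 a6 a7) (prodl (mk8 0 a1 a2 a3 a4 a5 a6 a7) x y) =
  prodr (mk8 0 a1 a2 a3 a4 a5 a6 a7) (fiso (mk8 0 a1 a2 a3 a4 a5 a6 a7) x) (fiso (mk8 0 a1 a2 a3 a4 a5 a6 a7) y).
Proof. (elim/octW: x => *; elim/octW: y => *; rewrite /fiso; osimp; rewrite onorm2E; oring). Qed.

End S.

Section S.
Variable R : realType.
Implicit Types (p q r s : quat R) (x y z u v w : oct R) (k : R).

Definition dot (u v : oct R) := \sum_(i < 8) u ord0 i * v ord0 i.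
Lemma dotE p q r s : dot (of_quats p q) (of_quats r s) =
  q0 p * q0 r + q1 p * q1 r + q2 p * q2 r + q3 p * q3 r +
  q0 q * q0 s + q1 q * q1 s + q2 q * q2 s + q3 q * q3 s.
Proof. by rewrite /dot !big_ord_recr big_ord0 /= !of_quats_coord /= add0r. Qed.

Definition comb (a x : oct R) (c1 c2 c3 c4 : R) :=
  c1 *: oone R + c2 *: a + c3 *: x + c4 *: omul a x.
Definition Wsp (a x : oct R) := <<[:: oone R; a; x; omul a x]>>%VS.

Lemma mem_comb a x c1 c2 c3 c4 : comb a x c1 c2 c3 c4 \in Wsp a x.
Proof.
by rewrite /comb !rpredD ?rpredZ // memv_span // !inE eqxx ?orbT.
Qed.

Section Table.
Variables a1 a2 a3 a4 a5 a6 a7 x0 x1 x2 x3 x4 x5 x6 x7 : R.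
Let A := mk8 0 a1 a2 a3 a4 a5 a6 a7.
Let X := mk8 x0 x1 x2 x3 x4 x5 x6 x7.
Let t := dot (oone R) X.
Let p := dot A X.
Let n := dot X X.
Let N := dot A A.
Ltac tab := rewrite /comb /A /X /t /p /n /N; osimp; rewrite ?dotE; oring.

Lemma tc1 : oconj (oone R) = comb A X 1 0 0 0. Proof. tab. Qed.
Lemma tca : oconj A = comb A X 0 (-1) 0 0. Proof. tab. Qed.
Lemma tcx : oconj X = comb A X (2 * t) 0 (-1) 0. Proof. tab. Qed.
Lemma tcax : oconj (omul A X) = comb A X (-2 * p) 0 0 (-1). Proof. tab. Qed.
Lemma t11 : omul (oone R) (oone R) = comb A X 1 0 0 0. Proof. tab. Qed.
Lemma t1a : omul (oone R) A = comb A X 0 1 0 0. Proof. tab. Qed.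
Lemma t1x : omul (oone R) X = comb A X 0 0 1 0. Proof. tab. Qed.
Lemma t1ax : omul (oone R) (omul A X) = comb A X 0 0 0 1. Proof. tab. Qed.
Lemma ta1 : omul A (oone R) = comb A X 0 1 0 0. Proof. tab. Qed.
Lemma tx1 : omul X (oone R) = comb A X 0 0 1 0. Proof. tab. Qed.
Lemma tax1 : omul (omul A X) (oone R) = comb A X 0 0 0 1. Proof. tab. Qed.
Lemma taa : omul A A = comb A X (-N) 0 0 0. Proof. tab. Qed.
Lemma tax : omul A X = comb A X 0 0 0 1. Proof. tab. Qed.
Lemma taax : omul A (omul A X) = comb A X 0 0 (-N) 0. Proof. tab. Qed.
Lemma txa : omul X A = comb A X (-2 * p) (2 * t) 0 (-1). Proof. tab. Qed.
Lemma txx : omul X X = comb A X (-n) 0 (2 * t) 0. Proof. tab. Qed.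
Lemma txax : omul X (omul A X) = comb A X 0 n (-2 * p) 0. Proof. tab. Qed.
Lemma taxa : omul (omul A X) A = comb A X (-2 * t*N) (-2 * p) N 0. Proof. tab. Qed.
Lemma taxx : omul (omul A X) X = comb A X 0 (-n) 0 (2 * t). Proof. tab. Qed.
Lemma taxax : omul (omul A X) (omul A X) = comb A X (-N * n) 0 0 (-2 * p). Proof. tab. Qed.


Lemma mc1 : oconj (oone R) \in Wsp A X. Proof. by rewrite tc1 mem_comb. Qed.
Lemma mca : oconj A \in Wsp A X. Proof. by rewrite tca mem_comb. Qed.
Lemma mcx : oconj X \in Wsp A X. Proof. by rewrite tcx mem_comb. Qed.
Lemma mcax : oconj (omul A X) \in Wsp A X. Proof. by rewrite tcax mem_comb. Qed.
Lemma m11 : omul (oone R) (oone R) \in Wsp A X. Proof. by rewrite t11 mem_comb. Qed.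
Lemma m1a : omul (oone R) A \in Wsp A X. Proof. by rewrite t1a mem_comb. Qed.
Lemma m1x : omul (oone R) X \in Wsp A X. Proof. by rewrite t1x mem_comb. Qed.
Lemma m1ax : omul (oone R) (omul A X) \in Wsp A X. Proof. by rewrite t1ax mem_comb. Qed.
Lemma ma1 : omul A (oone R) \in Wsp A X. Proof. by rewrite ta1 mem_comb. Qed.
Lemma mx1 : omul X (oone R) \in Wsp A X. Proof. by rewrite tx1 mem_comb. Qed.
Lemma max1 : omul (omul A X) (oone R) \in Wsp A X. Proof. by rewrite tax1 mem_comb. Qed.
Lemma maa : omul A A \in Wsp A X. Proof. by rewrite taa mem_comb. Qed.
Lemma max : omul A X \in Wsp A X. Proof. by rewrite tax mem_comb. Qed.
Lemma maax : omul A (omul A X) \in Wsp A X. Proof. by rewrite taax mem_comb. Qed.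
Lemma mxa : omul X A \in Wsp A X. Proof. by rewrite txa mem_comb. Qed.
Lemma mxx : omul X X \in Wsp A X. Proof. by rewrite txx mem_comb. Qed.
Lemma mxax : omul X (omul A X) \in Wsp A X. Proof. by rewrite txax mem_comb. Qed.
Lemma maxa : omul (omul A X) A \in Wsp A X. Proof. by rewrite taxa mem_comb. Qed.
Lemma maxx : omul (omul A X) X \in Wsp A X. Proof. by rewrite taxx mem_comb. Qed.
Lemma maxax : omul (omul A X) (omul A X) \in Wsp A X. Proof. by rewrite taxax mem_comb. Qed.

End Table.

Lemma lin_sum (g : oct R -> oct R) (glin : forall k u v, g (k *: u + v) = k *: g u + g v)
  n (c : 'I_n -> R) (w : 'I_n -> oct R) :
  g (\sum_(i < n) c i *: w i) = \sum_(i < n) c i *: g (w i).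
Proof.
have g0 : g 0 = 0.
  by have := glin (-1) 0 0; rewrite scaler0 addr0 scaleN1r addNr.
elim: n c w => [|n IH] c w; first by rewrite !big_ord0.
by rewrite !big_ord_recr /= addrC glin IH addrC.
Qed.

Lemma span_lin (g : oct R -> oct R) (glin : forall k u v, g (k *: u + v) = k *: g u + g v)
  (s : seq (oct R)) :
  (forall i, (i < size s)%N -> g (nth 0 s i) \in <<s>>%VS) ->
  forall u, u \in <<s>>%VS -> g u \in <<s>>%VS.
Proof.
move=> H u /(coord_span (X := in_tuple s)) ->.
rewrite lin_sum //; apply: rpred_sum => i _; apply: rpredZ; exact: H.
Qed.

Lemma omul_linl k u v w : omul (k *: u + v) w = k *: omul u w + omul v w.
Proof. elim/octW: u => *; elim/octW: v => *; elim/octW: w => *; osimp; oring. Qed.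
Lemma omul_linr k u v w : omul w (k *: u + v) = k *: omul w u + omul w v.
Proof. elim/octW: u => *; elim/octW: v => *; elim/octW: w => *; osimp; oring. Qed.
Lemma oconj_lin k u v : oconj (k *: u + v) = k *: oconj u + oconj v.
Proof. elim/octW: u => *; elim/octW: v => *; osimp; oring. Qed.

Lemma span_bilin (s : seq (oct R)) :
  (forall i j, (i < size s)%N -> (j < size s)%N -> omul (nth 0 s i) (nth 0 s j) \in <<s>>%VS) ->
  forall u v, u \in <<s>>%VS -> v \in <<s>>%VS -> omul u v \in <<s>>%VS.
Proof.
move=> H u v Hu; apply: span_lin => [k ??|j Hj]; first exact: omul_linr.
by apply: (span_lin (g := fun z => omul z (nth 0 s j))) Hu => [k ??|i Hi]; [exact: omul_linl | exact: H].
Qed.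

Lemma Wsp_closed (a1 a2 a3 a4 a5 a6 a7 : R) x :
  Defs.subalg_closed (prodl (mk8 0 a1 a2 a3 a4 a5 a6 a7)) (Wsp (mk8 0 a1 a2 a3 a4 a5 a6 a7) x).
Proof.
elim/octW: x => x0 x1 x2 x3 x4 x5 x6 x7.
set A := mk8 0 a1 a2 a3 a4 a5 a6 a7; set X := mk8 x0 x1 x2 x3 x4 x5 x6 x7.
have hb : forall i j, (i < 4)%N -> (j < 4)%N ->
   omul (nth 0 [:: oone R; A; X; omul A X] i) (nth 0 [:: oone R; A; X; omul A X] j) \in Wsp A X.
  move=> [|[|[|[|//]]]] [|[|[|[|//]]]] _ _ /=;
  [exact: m11 | exact: m1a | exact: m1x | exact: m1ax | exact: ma1 | exact: maa
  | exact: max | exact: maax | exact: mx1 | exact: mxa | exact: mxx | exact: mxax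
  | exact: max1 | exact: maxa | exact: maxx | exact: maxax].
have hc : forall u, u \in Wsp A X -> oconj u \in Wsp A X.
  apply: span_lin => [k ??|]; first exact: oconj_lin.
  move=> [|[|[|[|//]]]] _ /=; [exact: mc1 | exact: mca | exact: mcx | exact: mcax].
have hA : A \in Wsp A X by rewrite memv_span // !inE eqxx ?orbT.
move=> u v Hu Hv; rewrite /prodl.
by apply: span_bilin => //; apply: span_bilin => //; apply: hc.
Qed.

Lemma Wsp_x a x : x \in Wsp a x.
Proof. by rewrite memv_span // !inE eqxx ?orbT. Qed.

Lemma Wsp_dim a x : (\dim (Wsp a x) <= 4)%N.
Proof. exact: dim_span. Qed.

Lemma gen_le (a1 a2 a3 a4 a5 a6 a7 : R) x U :
  gen_subalg (prodl (mk8 0 a1 a2 a3 a4 a5 a6 a7)) x U -> (U <= Wsp (mk8 0 a1 a2 a3 a4 a5 a6 a7) x)%VS.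
Proof. by case=> _ _; apply; [exact: Wsp_x | exact: Wsp_closed]. Qed.

End S.

Section S.
Variable R : realType.
Implicit Types (p q r s : quat R) (x y z u v w : oct R) (k : R).

Lemma comb4_id (a y : oct R) (m k0 k1 k2 k3 : R) :
  k0 *: (oone R + y) + (k1 *: ((1 - m) *: a + 2 *: omul a y) +
   (k2 *: ((1 - 6 * m + m ^+ 2) *: a + (4 - 4 * m) *: omul a y) +
    (k3 *: ((1 + m) *: (oone R - y)) + 0))) =
  (k0 + k3 * (1 + m)) *: oone R + (k1 * (1 - m) + k2 * (1 - 6 * m + m ^+ 2)) *: a
  + (k0 - k3 * (1 + m)) *: y + (2 * k1 + k2 * (4 - 4 * m)) *: omul a y.
Proof. elim/octW: a => *; elim/octW: y => *; rewrite zeroE; osimp; oring. Qed.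

Lemma solve4 (m K0 K1 K2 K3 : R) : 0 <= m ->
  K0 + K3 * (1 + m) = 0 ->
  K1 * (1 - m) + K2 * (1 - 6 * m + m ^+ 2) = 0 ->
  K0 - K3 * (1 + m) = 0 ->
  2 * K1 + K2 * (4 - 4 * m) = 0 ->
  [/\ K0 = 0, K1 = 0, K2 = 0 & K3 = 0].
Proof.
move=> hm h1 h2 h3 h4.
have hm1 : 1 + m != 0 by rewrite lt0r_neq0 // ltr_pwDl.
have h2m : 2 * (1 + m) ^+ 2 != 0 by rewrite mulf_neq0 ?expf_neq0 // pnatr_eq0.
have e0 : 2 * K0 = 0 by rewrite -[RHS](addr0 0) -{1}h1 -h3; ring.
have e3 : (2 * (1 + m)) * K3 = 0 by rewrite -[RHS](subr0 0) -{1}h1 -h3; ring.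
have e1 : (2 * (1 + m) ^+ 2) * K1 = 0.
  by rewrite -[RHS](subr0 0) -[X in X - _](mulr0 (4 - 4 * m)) -[X in _ - X](mulr0 (1 - 6 * m + m ^+ 2)) -{1}h2 -h4; ring.
have e2 : (2 * (1 + m) ^+ 2) * K2 = 0.
  by rewrite -[RHS](subr0 0) -[X in X - _](mulr0 (1 - m)) -[X in _ - X](mulr0 2) -{1}h4 -h2; ring.
split.
- by move/eqP: e0; rewrite mulf_eq0 pnatr_eq0 /= => /eqP.
- by move/eqP: e1; rewrite mulf_eq0 (negbTE h2m) => /eqP.
- by move/eqP: e2; rewrite mulf_eq0 (negbTE h2m) => /eqP.
- by move/eqP: e3; rewrite mulf_eq0 mulf_eq0 pnatr_eq0 (negbTE hm1) => /eqP.
Qed.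

Lemma lower_bound (a y : oct R) (m : R) :
  0 < m ->
  prodl a (oone R + y) (oone R + y) = (1 - m) *: a + 2 *: omul a y ->
  prodl a ((1 - m) *: a + 2 *: omul a y) ((1 - m) *: a + 2 *: omul a y) =
    (1 - 6 * m + m ^+ 2) *: a + (4 - 4 * m) *: omul a y ->
  prodl a ((1 - m) *: a + 2 *: omul a y) (oone R + y) = (1 + m) *: (oone R - y) ->
  (forall c1 c2 c3 c4, c1 *: oone R + c2 *: a + c3 *: y + c4 *: omul a y = 0 ->
     [/\ c1 = 0, c2 = 0, c3 = 0 & c4 = 0]) ->
  Defs.subalg_closed (prodl a) (Wsp a (oone R + y)) ->
  exists x U, gen_subalg (prodl a) x U /\ \dim U = 4%N.
Proof.
move=> hm E1 E2 E3 Hfr Hcl.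
set x := oone R + y.
set S := (1 - m) *: a + 2 *: omul a y.
set s := [:: x; prodl a x x; prodl a (prodl a x x) (prodl a x x); prodl a (prodl a x x) x].
have hfree : free s.
  apply/(@freeP _ _ _ (in_tuple s)) => k Hk.
  move: Hk; rewrite /= !big_ord_recl big_ord0 /= E1 E2 E3 comb4_id.
  move=> /Hfr [h1 h2 h3 h4].
  have [e0 e1 e2 e3] := solve4 (ltW hm) h1 h2 h3 h4.
  move=> i; case: i => [[|[|[|[|n]]]] Hi]; last by [].
  - by rewrite (_ : Ordinal Hi = ord0) //; apply: val_inj.
  - by rewrite (_ : Ordinal Hi = lift ord0 ord0) //; apply: val_inj.
  - by rewrite (_ : Ordinal Hi = lift ord0 (lift ord0 ord0)) //; apply: val_inj.
  - by rewrite (_ : Ordinal Hi = lift ord0 (lift ord0 (lift ord0 ord0))) //; apply: val_inj.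
have hdim : \dim <<s>>%VS = 4%N := eqP hfree.
have hx : x \in Wsp a x := Wsp_x a x.
have hsV : forall V : {vspace oct R}, x \in V -> Defs.subalg_closed (prodl a) V -> (<<s>> <= V)%VS.
  move=> V xV clV; have x2 : prodl a x x \in V by exact: clV.
  apply/span_subvP => z; rewrite !inE => /or4P[]/eqP->; rewrite ?xV ?x2 //; exact: clV.
have hsW := hsV _ hx Hcl.
have hWs : (Wsp a x <= <<s>>)%VS.
  by rewrite -(geq_leqif (dimv_leqif_sup hsW)) hdim Wsp_dim.
exists x, (Wsp a x); split.
  split=> // V xV clV; exact: subv_trans hWs (hsV V xV clV).
apply/eqP; rewrite eqn_leq Wsp_dim /=; have := dimvS hsW; by rewrite hdim.
Qed.

End S.

Section S.
Variable R : realType.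
Implicit Types (p q r s : quat R) (x y z u v w : oct R) (k : R).

Lemma dot0r u : dot u 0 = 0.
Proof. by rewrite /dot big1 // => i _; rewrite mxE mulr0. Qed.

Section Inst_1.
Variables a1 a2 a3 a4 a5 a6 a7 : R.
Let A := mk8 0 a1 a2 a3 a4 a5 a6 a7.
Let Y := y1 a1 a2 a3 a4 a5 a6 a7.
Let m := a2 ^+ 2 + a3 ^+ 2 + a4 ^+ 2 + a5 ^+ 2 + a6 ^+ 2 + a7 ^+ 2.
Let N := a1 ^+ 2 + a2 ^+ 2 + a3 ^+ 2 + a4 ^+ 2 + a5 ^+ 2 + a6 ^+ 2 + a7 ^+ 2.
Let S := (1 - m) *: A + 2 *: omul A Y.
Ltac tab := rewrite /S /A /Y /m /N /y1; osimp; rewrite ?dotE; oring.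

Lemma E1_1 : prodl A (oone R + Y) (oone R + Y) = (1 - m) *: A + 2 *: omul A Y.
Proof. tab. Qed.
Lemma E2_1 : prodl A S S = N *: ((1 - 6 * m + m ^+ 2) *: A + (4 - 4 * m) *: omul A Y).
Proof. tab. Qed.
Lemma E3_1 : prodl A S (oone R + Y) = (N * (1 + m)) *: (oone R - Y).
Proof. tab. Qed.
Lemma D_1 (c1 c2 c3 c4 : R) :
  let c := c1 *: oone R + c2 *: A + c3 *: Y + c4 *: omul A Y in
  [/\ dot (oone R) c = c1, dot A c = c2 * N, dot Y c = c3 * m & dot (omul A Y) c = c4 * (N * m)].
Proof. rewrite /=; split; rewrite /A /Y /y1 /m /N; osimp; rewrite dotE; qcbn; ring. Qed.

Lemma inst_1 : N = 1 -> 0 < m ->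
  exists x U, gen_subalg (prodl A) x U /\ \dim U = 4%N.
Proof.
move=> hN hm; apply: (@lower_bound _ A Y m hm).
- exact: E1_1.
- by rewrite -/S E2_1 hN scale1r.
- by rewrite -/S E3_1 hN mul1r.
- move=> c1 c2 c3 c4 H0; have [d1 d2 d3 d4] := D_1 c1 c2 c3 c4.
  rewrite /= H0 !dot0r in d1 d2 d3 d4.
  rewrite hN ?mulr1 ?mul1r in d2 d4.
  split; [by rewrite -d1 | by rewrite -d2 | | ].
  + by move/esym/eqP: d3; rewrite mulf_eq0 (gt_eqF hm) orbF => /eqP.
  + by move/esym/eqP: d4; rewrite mulf_eq0 (gt_eqF hm) orbF => /eqP.
- exact: Wsp_closed.
Qed.
End Inst_1.

Section Inst_2.
Variables a1 a2 a3 a4 a5 a6 a7 : R.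
Let A := mk8 0 a1 a2 a3 a4 a5 a6 a7.
Let Y := y2 a1 a2 a3 a4 a5 a6 a7.
Let m := a1 ^+ 2 + a3 ^+ 2 + a4 ^+ 2 + a5 ^+ 2 + a6 ^+ 2 + a7 ^+ 2.
Let N := a1 ^+ 2 + a2 ^+ 2 + a3 ^+ 2 + a4 ^+ 2 + a5 ^+ 2 + a6 ^+ 2 + a7 ^+ 2.
Let S := (1 - m) *: A + 2 *: omul A Y.
Ltac tab := rewrite /S /A /Y /m /N /y2; osimp; rewrite ?dotE; oring.

Lemma E1_2 : prodl A (oone R + Y) (oone R + Y) = (1 - m) *: A + 2 *: omul A Y.
Proof. tab. Qed.
Lemma E2_2 : prodl A S S = N *: ((1 - 6 * m + m ^+ 2) *: A + (4 - 4 * m) *: omul A Y).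
Proof. tab. Qed.
Lemma E3_2 : prodl A S (oone R + Y) = (N * (1 + m)) *: (oone R - Y).
Proof. tab. Qed.
Lemma D_2 (c1 c2 c3 c4 : R) :
  let c := c1 *: oone R + c2 *: A + c3 *: Y + c4 *: omul A Y in
  [/\ dot (oone R) c = c1, dot A c = c2 * N, dot Y c = c3 * m & dot (omul A Y) c = c4 * (N * m)].
Proof. rewrite /=; split; rewrite /A /Y /y2 /m /N; osimp; rewrite dotE; qcbn; ring. Qed.

Lemma inst_2 : N = 1 -> 0 < m ->
  exists x U, gen_subalg (prodl A) x U /\ \dim U = 4%N.
Proof.
move=> hN hm; apply: (@lower_bound _ A Y m hm).
- exact: E1_2.
- by rewrite -/S E2_2 hN scale1r.
- by rewrite -/S E3_2 hN mul1r.
- move=> c1 c2 c3 c4 H0; have [d1 d2 d3 d4] := D_2 c1 c2 c3 c4.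
  rewrite /= H0 !dot0r in d1 d2 d3 d4.
  rewrite hN ?mulr1 ?mul1r in d2 d4.
  split; [by rewrite -d1 | by rewrite -d2 | | ].
  + by move/esym/eqP: d3; rewrite mulf_eq0 (gt_eqF hm) orbF => /eqP.
  + by move/esym/eqP: d4; rewrite mulf_eq0 (gt_eqF hm) orbF => /eqP.
- exact: Wsp_closed.
Qed.
End Inst_2.
End S.

Section S.
Variable R : realType.
Implicit Types (p q r s : quat R) (x y z u v w : oct R) (k : R).

Lemma mk8_inj (x0 x1 x2 x3 x4 x5 x6 x7 y0 y1 y2 y3 y4 y5 y6 y7 : R) :
  mk8 x0 x1 x2 x3 x4 x5 x6 x7 = mk8 y0 y1 y2 y3 y4 y5 y6 y7 ->
  x0 = y0 /\ x1 = y1 /\ x2 = y2 /\ x3 = y3 /\ x4 = y4 /\ x5 = y5 /\ x6 = y6 /\ x7 = y7.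
Proof.
move=> H; have := congr1 (@ofst R) H; have := congr1 (@osnd R) H.
by rewrite /mk8 !ofstE !osndE => -[-> -> -> ->] [-> -> -> ->].
Qed.

Lemma sq_mk8 (a0 a1 a2 a3 a4 a5 a6 a7 : R) :
  omul (mk8 a0 a1 a2 a3 a4 a5 a6 a7) (mk8 a0 a1 a2 a3 a4 a5 a6 a7) =
  mk8 (a0 ^+ 2 - (a1 ^+ 2 + a2 ^+ 2 + a3 ^+ 2 + a4 ^+ 2 + a5 ^+ 2 + a6 ^+ 2 + a7 ^+ 2))
      (2 * a0 * a1) (2 * a0 * a2) (2 * a0 * a3) (2 * a0 * a4) (2 * a0 * a5) (2 * a0 * a6) (2 * a0 * a7).
Proof. osimp; oring. Qed.

Lemma one_mk8 : oone R = mk8 1 0 0 0 0 0 0 0.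
Proof. by rewrite oneE. Qed.
Lemma mone_mk8 : - oone R = mk8 (-1) 0 0 0 0 0 0 0.
Proof. rewrite oneE oppE /mk8; congr of_quats; congr Quat; qcbn; by rewrite ?oppr0. Qed.

Lemma sq0 (x : R) : x ^+ 2 = 0 -> x = 0.
Proof. by move/eqP; rewrite expf_eq0 /= => /eqP. Qed.

Lemma sumsq6 (x1 x2 x3 x4 x5 x6 : R) : x1 ^+ 2 + x2 ^+ 2 + x3 ^+ 2 + x4 ^+ 2 + x5 ^+ 2 + x6 ^+ 2 = 0 ->
  x1 = 0 /\ x2 = 0 /\ x3 = 0 /\ x4 = 0 /\ x5 = 0 /\ x6 = 0.
Proof.
move=> h; have s1 := sqr_ge0 x1; have s2 := sqr_ge0 x2; have s3 := sqr_ge0 x3;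
have s4 := sqr_ge0 x4; have s5 := sqr_ge0 x5; have s6 := sqr_ge0 x6.
by do ! split; apply: sq0; lra.
Qed.

Lemma sumsq7 (x1 x2 x3 x4 x5 x6 x7 : R) :
  x1 ^+ 2 + x2 ^+ 2 + x3 ^+ 2 + x4 ^+ 2 + x5 ^+ 2 + x6 ^+ 2 + x7 ^+ 2 = 0 ->
  x1 = 0 /\ x2 = 0 /\ x3 = 0 /\ x4 = 0 /\ x5 = 0 /\ x6 = 0 /\ x7 = 0.
Proof.
move=> h; have s1 := sqr_ge0 x1; have s2 := sqr_ge0 x2; have s3 := sqr_ge0 x3;
have s4 := sqr_ge0 x4; have s5 := sqr_ge0 x5; have s6 := sqr_ge0 x6; have s7 := sqr_ge0 x7.
by do ! split; apply: sq0; lra.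
Qed.

Lemma prod4 (m a v : R) : a != 0 -> 4 * m ^+ 3 * a * v = 0 -> m = 0 \/ v = 0.
Proof.
move=> ha /eqP; rewrite mulf_eq0 => /orP[|/eqP]; last by right.
rewrite mulf_eq0 (negbTE ha) orbF mulf_eq0 pnatr_eq0 /= expf_eq0 /= => /eqP; by left.
Qed.

Section Scal.
Variables a0 a1 a2 a3 a4 a5 a6 a7 : R.
Hypothesis hN : a0 ^+ 2 + a1 ^+ 2 + a2 ^+ 2 + a3 ^+ 2 + a4 ^+ 2 + a5 ^+ 2 + a6 ^+ 2 + a7 ^+ 2 = 1.
Let A := mk8 a0 a1 a2 a3 a4 a5 a6 a7.

Lemma P3_cases : omul A A = oone R \/ omul A A = - oone R ->
  a0 = 0 \/ (a1 = 0 /\ a2 = 0 /\ a3 = 0 /\ a4 = 0 /\ a5 = 0 /\ a6 = 0 /\ a7 = 0).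
Proof.
rewrite /A sq_mk8 mone_mk8 one_mk8 => -[] /mk8_inj [h0 _].
  right; apply: sumsq7; move: h0 hN; lra.
left; apply: sq0; move: h0 hN; lra.
Qed.

Lemma cases_P3 :
  a0 = 0 \/ (a1 = 0 /\ a2 = 0 /\ a3 = 0 /\ a4 = 0 /\ a5 = 0 /\ a6 = 0 /\ a7 = 0) ->
  omul A A = oone R \/ omul A A = - oone R.
Proof.
move: hN; rewrite /A sq_mk8 mone_mk8 one_mk8 => hN' [h0|[h1 [h2 [h3 [h4 [h5 [h6 h7]]]]]]].
  rewrite h0 in hN' *; right; congr mk8; rewrite ?mulr0 ?mul0r //; move: hN'; rewrite expr0n /= add0r; lra.
rewrite h1 h2 h3 h4 h5 h6 h7 in hN' *; left; congr mk8; rewrite ?mulr0 ?mul0r //; move: hN'; rewrite expr0n /= !addr0 subr0 //.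
Qed.

Lemma key_cases (m1 m2 : R) :
  m1 = a2 ^+ 2 + a3 ^+ 2 + a4 ^+ 2 + a5 ^+ 2 + a6 ^+ 2 + a7 ^+ 2 ->
  m2 = a1 ^+ 2 + a3 ^+ 2 + a4 ^+ 2 + a5 ^+ 2 + a6 ^+ 2 + a7 ^+ 2 ->
  4 * m1 ^+ 3 * (a0 ^+ 2 + a1 ^+ 2 + a2 ^+ 2 + a3 ^+ 2 + a4 ^+ 2 + a5 ^+ 2 + a6 ^+ 2 + a7 ^+ 2) * a0 *
  (a1 ^+ 2 + a2 ^+ 2 + a3 ^+ 2 + a4 ^+ 2 + a5 ^+ 2 + a6 ^+ 2 + a7 ^+ 2) = 0 ->
  4 * m2 ^+ 3 * (a0 ^+ 2 + a1 ^+ 2 + a2 ^+ 2 + a3 ^+ 2 + a4 ^+ 2 + a5 ^+ 2 + a6 ^+ 2 + a7 ^+ 2) * a0 *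
  (a1 ^+ 2 + a2 ^+ 2 + a3 ^+ 2 + a4 ^+ 2 + a5 ^+ 2 + a6 ^+ 2 + a7 ^+ 2) = 0 ->
  a0 = 0 \/ (a1 = 0 /\ a2 = 0 /\ a3 = 0 /\ a4 = 0 /\ a5 = 0 /\ a6 = 0 /\ a7 = 0).
Proof.
move=> e1 e2; rewrite hN !mulr1 => h1 h2.
have [->|a0n] := eqVneq a0 0; first by left.
right.
have [m10|V0] := prod4 a0n h1; last exact: sumsq7.
have [m20|V0] := prod4 a0n h2; last exact: sumsq7.
rewrite m10 in e1; rewrite m20 in e2.
have [h2' [h3 [h4 [h5 [h6 h7]]]]] := sumsq6 (esym e1).
have [h1' _] := sumsq6 (esym e2).
by do ! split.
Qed.

End Scal.


Lemma prop5_main (a : oct R) :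
  onorm2 a = 1 ->
  let P1 := forall x : oct R,
      assoc (prodl a) (sq (prodl a) x) (sq (prodl a) x) (sq (prodl a) x) = 0 in
  let P2 := forall x : oct R,
      assoc (prodr a) (sq (prodr a) x) (sq (prodr a) x) (sq (prodr a) x) = 0 in
  let P3 := omul a a = oone R \/ omul a a = - oone R in
  [/\ (P1 <-> P2), (P2 <-> P3),
      (P3 -> isomorphic (prodl a) (prodr a)) &
      (omul a a = - oone R -> has_degree (prodl a) 4)].
Proof.
move=> hN0; cbv zeta; move: hN0.
elim/octW: a => a0 a1 a2 a3 a4 a5 a6 a7 hN0.
have hN : a0 ^+ 2 + a1 ^+ 2 + a2 ^+ 2 + a3 ^+ 2 + a4 ^+ 2 + a5 ^+ 2 + a6 ^+ 2 + a7 ^+ 2 = 1.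
  by move: hN0; rewrite /mk8 onorm2E; qcbn.
have P1P3 : (forall x, assoc (prodl (mk8 a0 a1 a2 a3 a4 a5 a6 a7)) (sq (prodl (mk8 a0 a1 a2 a3 a4 a5 a6 a7)) x)
      (sq (prodl (mk8 a0 a1 a2 a3 a4 a5 a6 a7)) x) (sq (prodl (mk8 a0 a1 a2 a3 a4 a5 a6 a7)) x) = 0) <->
    (omul (mk8 a0 a1 a2 a3 a4 a5 a6 a7) (mk8 a0 a1 a2 a3 a4 a5 a6 a7) = oone R \/
     omul (mk8 a0 a1 a2 a3 a4 a5 a6 a7) (mk8 a0 a1 a2 a3 a4 a5 a6 a7) = - oone R).
  split.
    move=> H; apply: (cases_P3 hN); apply: (key_cases hN erefl erefl).
      have := f_equal (@q0 R) (f_equal (@ofst R) (H (y1 a1 a2 a3 a4 a5 a6 a7))).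
      by rewrite sq_y1_l re_assoc_l zeroE ofstE.
    have := f_equal (@q0 R) (f_equal (@ofst R) (H (y2 a1 a2 a3 a4 a5 a6 a7))).
    by rewrite sq_y2_l re_assoc_l zeroE ofstE.
  move=> /(P3_cases hN) [h0|[h1 [h2 [h3 [h4 [h5 [h6 h7]]]]]]] x.
    rewrite h0 (imag_eta (re_sq_l a1 a2 a3 a4 a5 a6 a7 x)); exact: assoc_imag_l.
  rewrite h1 h2 h3 h4 h5 h6 h7; have [c0 ->] := sq_real_l a0 x; exact: assoc_real_l.
have P2P3 : (forall x, assoc (prodr (mk8 a0 a1 a2 a3 a4 a5 a6 a7)) (sq (prodr (mk8 a0 a1 a2 a3 a4 a5 a6 a7)) x)
      (sq (prodr (mk8 a0 a1 a2 a3 a4 a5 a6 a7)) x) (sq (prodr (mk8 a0 a1 a2 a3 a4 a5 a6 a7)) x) = 0) <->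
    (omul (mk8 a0 a1 a2 a3 a4 a5 a6 a7) (mk8 a0 a1 a2 a3 a4 a5 a6 a7) = oone R \/
     omul (mk8 a0 a1 a2 a3 a4 a5 a6 a7) (mk8 a0 a1 a2 a3 a4 a5 a6 a7) = - oone R).
  split.
    move=> H; apply: (cases_P3 hN); apply: (key_cases hN erefl erefl).
      have := f_equal (@q0 R) (f_equal (@ofst R) (H (y1 a1 a2 a3 a4 a5 a6 a7))).
      by rewrite sq_y1_r re_assoc_r zeroE ofstE.
    have := f_equal (@q0 R) (f_equal (@ofst R) (H (y2 a1 a2 a3 a4 a5 a6 a7))).
    by rewrite sq_y2_r re_assoc_r zeroE ofstE.
  move=> /(P3_cases hN) [h0|[h1 [h2 [h3 [h4 [h5 [h6 h7]]]]]]] x.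
    rewrite h0 (imag_eta (re_sq_r a1 a2 a3 a4 a5 a6 a7 x)); exact: assoc_imag_r.
  rewrite h1 h2 h3 h4 h5 h6 h7; have [c0 ->] := sq_real_r a0 x; exact: assoc_real_r.
split.
- split => H; [apply/P2P3/P1P3 | apply/P1P3/P2P3] => //.
- exact: P2P3.
- move=> /(P3_cases hN) [h0|[h1 [h2 [h3 [h4 [h5 [h6 h7]]]]]]].
    rewrite h0 in hN0 *.
    exists (fiso (mk8 0 a1 a2 a3 a4 a5 a6 a7)); split.
    + exact: fiso_lin.
    + by exists (giso (mk8 0 a1 a2 a3 a4 a5 a6 a7)) => x; rewrite ?gf_imag ?fg_imag hN0 expr1n scale1r.
    + by move=> x y; have := fiso_hom_imag a1 a2 a3 a4 a5 a6 a7 x y; rewrite hN0 scale1r.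
  rewrite h1 h2 h3 h4 h5 h6 h7.
  exists (fun x => x); split => //; first by exists (fun x => x).
  by move=> x y; rewrite prodlr_real.
- rewrite sq_mk8 mone_mk8 => /mk8_inj [e0 _].
  have a00 : a0 = 0 by apply: sq0; lra.
  rewrite a00 in hN *.
  have hN' : a1 ^+ 2 + a2 ^+ 2 + a3 ^+ 2 + a4 ^+ 2 + a5 ^+ 2 + a6 ^+ 2 + a7 ^+ 2 = 1.
    by move: hN; rewrite expr0n /= add0r.
  split.
    move=> x U /gen_le H; exact: leq_trans (dimvS H) (Wsp_dim _ _).
  move=> k Hk.
  have [hm|hm] := ltP 0 (a2 ^+ 2 + a3 ^+ 2 + a4 ^+ 2 + a5 ^+ 2 + a6 ^+ 2 + a7 ^+ 2).
    have [x [U [hg hd]]] := inst_1 hN' hm.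
    by have := Hk x U hg; rewrite hd.
  have hm0 : a2 ^+ 2 + a3 ^+ 2 + a4 ^+ 2 + a5 ^+ 2 + a6 ^+ 2 + a7 ^+ 2 = 0.
    apply/eqP; rewrite eq_le hm /=.
    by rewrite !addr_ge0 ?sqr_ge0.
  have [h2 [h3 [h4 [h5 [h6 h7]]]]] := sumsq6 hm0.
  have hm2 : 0 < a1 ^+ 2 + a3 ^+ 2 + a4 ^+ 2 + a5 ^+ 2 + a6 ^+ 2 + a7 ^+ 2.
    move: hN'; rewrite h2 h3 h4 h5 h6 h7 expr0n /= !addr0 => ->; exact: ltr01.
  have [x [U [hg hd]]] := inst_2 hN' hm2.
  by have := Hk x U hg; rewrite hd.
Qed.

End S.

Theorem proposition5 (R : realType) (a : oct R) :
  onorm2 a = 1 ->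
  let P1 := forall x : oct R,
      assoc (prodl a) (sq (prodl a) x) (sq (prodl a) x) (sq (prodl a) x) = 0 in
  let P2 := forall x : oct R,
      assoc (prodr a) (sq (prodr a) x) (sq (prodr a) x) (sq (prodr a) x) = 0 in
  let P3 := omul a a = oone R \/ omul a a = - oone R in
  [/\ (P1 <-> P2), (P2 <-> P3),
      (P3 -> isomorphic (prodl a) (prodr a)) &
      (omul a a = - oone R -> has_degree (prodl a) 4)].
Proof. exact: prop5_main. Qed.
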